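(* Let $X$ be a compact Hausdorff space and $G$ a second-countable compact group acting continuously on $X$, and let $\alpha\colon G\to\mathrm{Aut}(C(X))$, $\alpha_g(f)(x)=f(g^{-1}\cdot x)$, be the induced action. Assume that $(G,C(G),\mathtt{Lt})$ is weakly equivariantly semiprojective with respect to the class of commutative C*-algebras. Then $\alpha$ has the Rokhlin property if and only if there is a homeomorphism $\sigma\colon X/G\times G\to X$ with $g\cdot\sigma(Gx,h)=\sigma(Gx,gh)$ for all $g,h\in G$ and $x\in X$.
   Context: $\mathtt{Lt}_g(f)(h)=f(g^{-1}h)$. For a C*-algebra $C$ with continuous $G$-action: $C_\infty=\ell^\infty(\mathbb N,C)/c_0(\mathbb N,C)$ with quotient map $\kappa_C$, with coordinatewise induced actions. $(G,C(G),\mathtt{Lt})$ is weakly equivariantly semiprojective with respect to commutative C*-algebras if for every commutative C*-algebra $C$ with continuous $G$-action and every equivariant homomorphism $\varphi\colon C(G)\to C_\infty$ there is an equivariant homomorphism $\psi\colon C(G)\to\ell^\infty(\mathbb N,C)$ with $\kappa_C\circ\psi=\varphi$. Rokhlin property for an action $\alpha$ on a unital $A$: with $A$ embedded in $A_\infty$ as constant sequences, $\alpha^\infty$ coordinatewise on $\ell^\infty(\mathbb N,A)$, $\ell^\infty_\alpha(\mathbb N,A)$ the sequences $a$ with $g\mapsto\alpha^\infty_g(a)$ norm continuous, $A_{\infty,\alpha}=\kappa_A(\ell^\infty_\alpha(\mathbb N,A))$ with action $\alpha_\infty$: there is a unital homomorphism $\varphi\colon C(G)\to A_{\infty,\alpha}\cap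 A'$ with $\varphi\circ\mathtt{Lt}_g=(\alpha_\infty)_g\circ\varphi$ for all $g$. *)

(* Defs.v *)
From HB Require Import structures.
From mathcomp Require Import all_boot all_order all_algebra.
From mathcomp Require Import all_classical all_reals all_analysis.
From mathcomp Require Import complex generic_quotient.
From mathcomp Require Import Rstruct Rstruct_topology.
Set Implicit Arguments. Unset Strict Implicit. Unset Printing Implicit Defensive.
Import Order.TTheory GRing.Theory Num.Theory.
Local Open Scope ring_scope.
Local Open Scope classical_set_scope.
Local Open Scope quotient_scope.

Notation Rr := Rdefinitions.R.
Notation C := (Rr[i]).
Notation normc := (@ComplexField.Normc.normc Rr).

Definition ccont {T : topologicalType} (f : T -> C) : Prop :=
  forall (t0 : T) (e : Rr), 0 < e -> \forall t \near t0, normc (f t - f t0) < e.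

Record group_law (G : Type) := GroupLaw {
  gmul : G -> G -> G; ginv : G -> G; gone : G;
  gmulA : forall a b c, gmul a (gmul b c) = gmul (gmul a b) c;
  gmul1 : forall a, gmul gone a = a;
  gmulV : forall a, gmul (ginv a) a = gone }.

Definition compact_group (G : topologicalType) (L : group_law G) : Prop :=
  [/\ hausdorff_space G, compact [set: G],
      continuous (fun p : G * G => gmul L p.1 p.2) & continuous (ginv L)].

Record group_action (G : Type) (L : group_law G) (X : Type) := GroupAction {
  act : G -> X -> X;
  act1 : forall x, act (gone L) x = x;
  actM : forall g h x, act (gmul L g h) x = act g (act h x) }.

Section Orbits.
Variables (G : Type) (L : group_law G) (X : choiceType) (a : group_action L X).

Definition orbit_rel : rel X := fun x y => `[< exists g, act a g x = y >].

Lemma orbit_rel_refl : reflexive orbit_rel.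
Proof. by move=> x; apply/asboolP; exists (gone L); rewrite act1. Qed.

Lemma orbit_rel_sym : symmetric orbit_rel.
Proof.
have H x y : orbit_rel x y -> orbit_rel y x.
  move=> /asboolP [g <-]; apply/asboolP; exists (ginv L g).
  by rewrite -actM gmulV act1.
by move=> x y; apply/idP/idP; apply: H.
Qed.

Lemma orbit_rel_trans : transitive orbit_rel.
Proof.
move=> y x z /asboolP [g <-] /asboolP [h <-]; apply/asboolP.
by exists (gmul L h g); rewrite actM.
Qed.

Definition orbit_equiv : equiv_rel X :=
  EquivRel orbit_rel orbit_rel_refl orbit_rel_sym orbit_rel_trans.
End Orbits.

Definition orbit_space (G : Type) (L : group_law G) (X : topologicalType)
  (a : group_action L X) : topologicalType :=
  quotient_topology {eq_quot (orbit_equiv a)}.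

Definition homeomorphism (S T : topologicalType) (f : S -> T) : Prop :=
  continuous f /\ exists g : T -> S, [/\ continuous g, cancel f g & cancel g f].

Definition Lt (G : Type) (L : group_law G) (g : G) (f : G -> C) : G -> C :=
  fun h => f (gmul L (ginv L g) h).

Record cstar_alg := CstarAlg {
  ca :> Type;
  c0 : ca; cadd : ca -> ca -> ca; copp : ca -> ca; cmul : ca -> ca -> ca;
  cscale : C -> ca -> ca; cstar : ca -> ca; cnorm : ca -> Rr;
  caddA : forall x y z, cadd x (cadd y z) = cadd (cadd x y) z;
  caddC : forall x y, cadd x y = cadd y x;
  cadd0 : forall x, cadd c0 x = x;
  caddN : forall x, cadd (copp x) x = c0;
  cscaleA : forall z w x, cscale z (cscale w x) = cscale (z * w) x;
  cscale1 : forall x, cscale 1 x = x;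
  cscaleDr : forall z x y, cscale z (cadd x y) = cadd (cscale z x) (cscale z y);
  cscaleDl : forall z w x, cscale (z + w) x = cadd (cscale z x) (cscale w x);
  cmulA : forall x y z, cmul x (cmul y z) = cmul (cmul x y) z;
  cmulDl : forall x y z, cmul (cadd x y) z = cadd (cmul x z) (cmul y z);
  cmulDr : forall x y z, cmul x (cadd y z) = cadd (cmul x y) (cmul x z);
  cmulZl : forall z x y, cmul (cscale z x) y = cscale z (cmul x y);
  cmulZr : forall z x y, cmul x (cscale z y) = cscale z (cmul x y);
  cstarK : forall x, cstar (cstar x) = x;
  cstarD : forall x y, cstar (cadd x y) = cadd (cstar x) (cstar y);
  cstarZ : forall z x, cstar (cscale z x) = cscale (conjc z) (cstar x);
  cstarM : forall x y, cstar (cmul x y) = cmul (cstar y) (cstar x);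
  cnorm_eq0 : forall x, cnorm x = 0 <-> x = c0;
  cnormD : forall x y, cnorm (cadd x y) <= cnorm x + cnorm y;
  cnormZ : forall z x, cnorm (cscale z x) = normc z * cnorm x;
  cnormM : forall x y, cnorm (cmul x y) <= cnorm x * cnorm y;
  cnorm_cstar : forall x, cnorm (cmul (cstar x) x) = cnorm x ^+ 2;
  ccomplete : forall u : nat -> ca,
    (forall e : Rr, 0 < e -> exists N, forall m n, (N <= m)%N -> (N <= n)%N ->
        cnorm (cadd (u m) (copp (u n))) < e) ->
    exists l, forall e : Rr, 0 < e -> exists N, forall n, (N <= n)%N ->
        cnorm (cadd (u n) (copp l)) < e }.

Definition csub (A : cstar_alg) (x y : A) : A := cadd x (copp y).

Definition ccommutative (A : cstar_alg) : Prop :=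
  forall x y : A, cmul x y = cmul y x.

Definition is_star_endo (A : cstar_alg) (f : A -> A) : Prop :=
  [/\ forall x y, f (cadd x y) = cadd (f x) (f y),
      forall z x, f (cscale z x) = cscale z (f x),
      forall x y, f (cmul x y) = cmul (f x) (f y)
    & forall x, f (cstar x) = cstar (f x)].

Definition cstar_action (G : topologicalType) (L : group_law G) (A : cstar_alg)
  (beta : G -> A -> A) : Prop :=
  [/\ forall x, beta (gone L) x = x,
      forall g h x, beta (gmul L g h) x = beta g (beta h x),
      forall g, is_star_endo (beta g)
    & forall (x : A) (g0 : G) (e : Rr), 0 < e ->
        \forall g \near g0, cnorm (csub (beta g x) (beta g0 x)) < e].

Definition cbounded (A : cstar_alg) (u : nat -> A) : Prop :=
  exists M : Rr, forall n, cnorm (u n) <= M.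
Definition cnull (A : cstar_alg) (u : nat -> A) : Prop :=
  forall e : Rr, 0 < e -> exists N, forall n, (N <= n)%N -> cnorm (u n) < e.

(* An equivariant *-homomorphism  phi : C(G) -> A_infty = ell^infty/c_0,
   represented by a lift Phi : C(G) -> ell^infty(N,A) (kappa_A o Phi = phi);
   the homomorphism identities then hold modulo c_0. *)
Definition equiv_hom_to_Ainf (G : topologicalType) (L : group_law G)
  (A : cstar_alg) (beta : G -> A -> A) (Phi : (G -> C) -> nat -> A) : Prop :=
  forall f f' : G -> C, ccont f -> ccont f' ->
  cbounded (Phi f) /\
  cnull (fun n => csub (Phi (fun t => f t + f' t) n) (cadd (Phi f n) (Phi f' n))) /\
  (forall z : C, cnull (fun n => csub (Phi (fun t => z * f t) n) (cscale z (Phi f n)))) /\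
  cnull (fun n => csub (Phi (fun t => f t * f' t) n) (cmul (Phi f n) (Phi f' n))) /\
  cnull (fun n => csub (Phi (fun t => conjc (f t)) n) (cstar (Phi f n))) /\
  (forall g : G, cnull (fun n => csub (Phi (Lt L g f) n) (beta g (Phi f n)))).

Definition equiv_hom_to_linf (G : topologicalType) (L : group_law G)
  (A : cstar_alg) (beta : G -> A -> A) (Psi : (G -> C) -> nat -> A) : Prop :=
  forall f f' : G -> C, ccont f -> ccont f' ->
  cbounded (Psi f) /\
  (forall n, Psi (fun t => f t + f' t) n = cadd (Psi f n) (Psi f' n)) /\
  (forall (z : C) n, Psi (fun t => z * f t) n = cscale z (Psi f n)) /\
  (forall n, Psi (fun t => f t * f' t) n = cmul (Psi f n) (Psi f' n)) /\
  (forall n, Psi (fun t => conjc (f t)) n = cstar (Psi f n)) /\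
  (forall (g : G) n, Psi (Lt L g f) n = beta g (Psi f n)).

Definition weakly_equiv_semiprojective_comm (G : topologicalType)
  (L : group_law G) : Prop :=
  forall (A : cstar_alg), ccommutative A ->
  forall beta : G -> A -> A, cstar_action L beta ->
  forall Phi : (G -> C) -> nat -> A, equiv_hom_to_Ainf L beta Phi ->
  exists Psi : (G -> C) -> nat -> A, equiv_hom_to_linf L beta Psi /\
    forall f, ccont f -> cnull (fun n => csub (Psi f n) (Phi f n)).

Section Rokhlin.
Variables (G X : topologicalType) (L : group_law G) (a : group_action L X).

Definition alpha (g : G) (f : X -> C) : X -> C := fun x => f (act a (ginv L g) x).

Definition linf_CX (u : nat -> X -> C) : Prop :=
  (forall n, ccont (u n)) /\ exists M : Rr, forall n x, normc (u n x) <= M.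

Definition null_CX (u : nat -> X -> C) : Prop :=
  forall e : Rr, 0 < e -> exists N, forall n, (N <= n)%N -> forall x, normc (u n x) < e.

Definition alpha_cont (u : nat -> X -> C) : Prop :=
  forall (g0 : G) (e : Rr), 0 < e -> \forall g \near g0,
    forall n x, normc (alpha g (u n) x - alpha g0 (u n) x) < e.

Definition in_Ainf_alpha (u : nat -> X -> C) : Prop :=
  exists v, [/\ linf_CX v, alpha_cont v & null_CX (fun n x => v n x - u n x)].

Definition rokhlin : Prop :=
  exists Phi : (G -> C) -> nat -> X -> C,
  forall f f' : G -> C, ccont f -> ccont f' ->
  linf_CX (Phi f) /\ in_Ainf_alpha (Phi f) /\
  (* commutes with the constant sequences, i.e. lands in A' *)
  (forall b : X -> C, ccont b ->
     null_CX (fun n x => Phi f n x * b x - b x * Phi f n x)) /\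
  null_CX (fun n x => Phi (fun t => f t + f' t) n x - (Phi f n x + Phi f' n x)) /\
  (forall z : C, null_CX (fun n x => Phi (fun t => z * f t) n x - z * Phi f n x)) /\
  null_CX (fun n x => Phi (fun t => f t * f' t) n x - Phi f n x * Phi f' n x) /\
  null_CX (fun n x => Phi (fun t => conjc (f t)) n x - conjc (Phi f n x)) /\
  null_CX (fun n x => Phi (fun _ => 1) n x - 1) /\
  (forall g : G, null_CX (fun n x => Phi (Lt L g f) n x - alpha g (Phi f n) x)).
End Rokhlin.

(* Main.v *)
Require Import Defs.
From HB Require Import structures.
From mathcomp Require Import all_boot all_order all_algebra.
From mathcomp Require Import all_classical all_reals all_analysis.
From mathcomp Require Import complex generic_quotient.
From mathcomp Require Import Rstruct Rstruct_topology.
From mathcomp Require Import ring lra.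
From Stdlib Require Import ProofIrrelevance.
Import Order.TTheory GRing.Theory Num.Theory.
Local Open Scope ring_scope.
Local Open Scope classical_set_scope.
Local Open Scope quotient_scope.
Local Open Scope complex_scope.
Local Open Scope ring_scope.

Lemma nc_ge0 (z : C) : 0 <= normc z.
Proof. exact: (normr_ge0 (z : Rcomplex Rr)). Qed.

Lemma nc_tri (a b : C) : normc (a + b) <= normc a + normc b.
Proof. exact: le_normcD. Qed.

Lemma nc_sym (a b : C) : normc (a - b) = normc (b - a).
Proof. exact: (distrC (a : Rcomplex Rr) b). Qed.

Lemma nc_N (a : C) : normc (- a) = normc a.
Proof. exact: normcN. Qed.

Lemma nc_M (a b : C) : normc (a * b) = normc a * normc b.
Proof. exact: ComplexField.Normc.normcM. Qed.

Lemma nc0 : normc (0 : C) = 0.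
Proof. exact: ComplexField.Normc.normc0. Qed.

Lemma nc1 : normc (1 : C) = 1.
Proof. exact: ComplexField.Normc.normc1. Qed.

Lemma nc_eq0 (a : C) : normc a = 0 -> a = 0.
Proof. exact: ComplexField.Normc.eq0_normc. Qed.

Lemma nc_conj (z : C) : normc (conjc z) = normc z.
Proof. by case: z => a b; rewrite /= sqrrN. Qed.

Lemma nc_real (r : Rr) : normc (r%:C) = `|r|.
Proof. by rewrite /= expr0n /= addr0 sqrtr_sqr. Qed.

Lemma nc_Re (z : C) : `|complex.Re z| <= normc z.
Proof.
case: z => a b /=; rewrite -sqrtr_sqr ler_wsqrtr // lerDl sqr_ge0 //.
Qed.

Lemma nc_Im (z : C) : `|complex.Im z| <= normc z.
Proof.
case: z => a b /=; rewrite -sqrtr_sqr ler_wsqrtr // lerDr sqr_ge0 //.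
Qed.

Lemma nc_ReIm (z : C) : normc z <= `|complex.Re z| + `|complex.Im z|.
Proof.
case: z => a b /=.
rewrite -[X in _ <= X]ger0_norm ?addr_ge0 // -sqrtr_sqr ler_wsqrtr //.
rewrite sqrrD -(real_normK (num_real a)) -(real_normK (num_real b)).
by rewrite addrAC lerDl mulrn_wge0 // mulr_ge0.
Qed.

Lemma mulJ (z : C) : z * conjc z = (normc z ^+ 2)%:C.
Proof.
case: z => a b /=; rewrite sqr_sqrtr ?addr_ge0 ?sqr_ge0 //.
by apply/eqP; rewrite eq_complex /=; apply/andP; split; apply/eqP; ring.
Qed.

Lemma nc_dist (a b : C) : normc a - normc b <= normc (a - b).
Proof. have := nc_tri (a - b) b; rewrite subrK; lra. Qed.

Definition nc (z : C) : Rr := normc z.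
Ltac ncf := repeat match goal with
 | |- context [@ComplexField.Normc.normc _ ?z] => change (@ComplexField.Normc.normc _ z) with (nc z)
 | H : context [@ComplexField.Normc.normc _ ?z] |- _ => change (@ComplexField.Normc.normc _ z) with (nc z) in H end.


Section CC.
Variable T : topologicalType.
Implicit Types f g : T -> C.

Lemma ccont_cst (c : C) : ccont (fun _ : T => c).
Proof. by move=> t0 e e0; near=> t; rewrite subrr nc0. Unshelve. all: end_near. Qed.

Lemma ccontD f g : ccont f -> ccont g -> ccont (fun t => f t + g t).
Proof.
move=> cf cg t0 e e0.
have e2 : 0 < e / 2 by rewrite divr_gt0.
apply: filterS2 (cf t0 _ e2) (cg t0 _ e2) => t h1 h2.
have -> : f t + g t - (f t0 + g t0) = (f t - f t0) + (g t - g t0) by ring.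
apply: le_lt_trans (nc_tri _ _) _; rewrite [e]splitr; exact: ltrD.
Qed.

Lemma nc_le_add (a b : C) : normc a <= normc b + normc (a - b).
Proof. have := nc_tri b (a - b); rewrite addrC subrK; ncf; lra. Qed.

Lemma ccontM f g : ccont f -> ccont g -> ccont (fun t => f t * g t).
Proof.
move=> cf cg t0 e e0.
pose M := normc (f t0) + normc (g t0) + 1.
have M0 : 0 < M by have := nc_ge0 (f t0); have := nc_ge0 (g t0); rewrite /M; ncf; lra.
pose d := Num.min 1 (e / (2 * M)).
have d0 : 0 < d by rewrite lt_min ltr01 /= divr_gt0 // mulr_gt0.
apply: filterS2 (cf t0 _ d0) (cg t0 _ d0) => t h1 h2.
have -> : f t * g t - f t0 * g t0 = f t * (g t - g t0) + (f t - f t0) * g t0 by ring.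
apply: le_lt_trans (nc_tri _ _) _; rewrite !nc_M.
have d1 : d <= 1 by rewrite ge_min lexx.
have hfM : normc (f t) <= M.
  have := nc_le_add (f t) (f t0); have := nc_ge0 (g t0); rewrite /M; ncf; lra.
have hgM : normc (g t0) <= M by have := nc_ge0 (f t0); rewrite /M; ncf; lra.
have H1 := ler_wpM2r (nc_ge0 (g t - g t0)) hfM.
have H2 := ler_wpM2l (nc_ge0 (f t - f t0)) hgM.
have H3 : M * normc (g t - g t0) < M * d by rewrite ltr_pM2l.
have H4 : normc (f t - f t0) * M < d * M by rewrite ltr_pM2r.
have H5 : d * M <= e / 2.
  have : d <= e / (2 * M) by rewrite ge_min lexx orbT.
  move=> /(ler_wpM2r (ltW M0)).
  have -> : e / (2 * M) * M = e / 2 by field; rewrite ?mulf_neq0 ?gt_eqF ?pnatr_eq0.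
  done.
ncf; lra.
Qed.

Lemma ccontJ f : ccont f -> ccont (fun t => conjc (f t)).
Proof.
move=> cf t0 e e0; apply: filterS (cf t0 _ e0) => t.
by rewrite -rmorphB nc_conj.
Qed.

Lemma ccontZ (z : C) f : ccont f -> ccont (fun t => z * f t).
Proof. by move=> cf; apply: ccontM => //; exact: ccont_cst. Qed.

Lemma ccont_comp (S : topologicalType) (h : S -> T) f :
  continuous h -> ccont f -> ccont (fun s => f (h s)).
Proof. move=> ch cf s0 e e0; exact: (ch s0) (cf (h s0) e e0). Qed.

Lemma ccont_real (r : T -> Rr) : continuous r -> ccont (fun t => (r t)%:C).
Proof.
move=> cr t0 e e0.
have : \forall t \near t0, `|r t0 - r t| < e.
  exact: ((@cvgrPdist_lt _ (Rdefinitions.R : realType) _ _ _ r (r t0)).1 (cr t0) e e0).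
apply: filterS => t; rewrite -rmorphB nc_real distrC //.
Qed.

Lemma ccont_inv f (e0 : Rr) : 0 < e0 -> (forall t, e0 <= normc (f t)) ->
  ccont f -> ccont (fun t => (f t)^-1).
Proof.
move=> he0 fe cf t0 e e0'.
have d0 : 0 < e * (e0 * e0) by rewrite !mulr_gt0.
apply: filterS (cf t0 _ d0) => t h.
have nz : forall s, f s != 0.
  move=> s; apply/eqP => fs0; have := fe s; rewrite fs0 nc0; ncf; lra.
have -> : (f t)^-1 - (f t0)^-1 = (f t0 - f t) / (f t * f t0).
  by field; rewrite !nz.
rewrite nc_M ComplexField.Normc.normcV nc_M nc_sym.
have p1 : 0 < normc (f t) * normc (f t0).
  by apply: mulr_gt0; apply: lt_le_trans he0 _.
rewrite ltr_pdivrMr //.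
apply: lt_le_trans h _; rewrite ler_pM2l //.
by apply: ler_pM; rewrite ?(ltW he0).
Qed.
End CC.
Arguments ccont_cst {T}.
Arguments ccontD {T f g}.
Arguments ccontM {T f g}.
Arguments ccontJ {T f}.
Arguments ccontZ {T} z {f}.
Arguments ccont_comp {T S h f}.
Arguments ccont_real {T r}.
Arguments ccont_inv {T f e0}.


Lemma ccont_bounded (T : topologicalType) (f : T -> C) :
  compact [set: T] -> ccont f -> exists M : Rr, 0 <= M /\ forall t, normc (f t) <= M.
Proof.
move=> cpt cf.
have H : \forall M \near +oo, [set: T] `<=` (fun t => normc (f t) < M).
  apply: ((compact_near_coveringP _).1 cpt Rr (+oo) (fun M t => normc (f t) < M)).
  move=> t _.
  exists ([set t' | normc (f t' - f t) < 1], [set M | normc (f t) + 1 < M]) => /=.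
  split; first exact: (cf t 1 ltr01).
  by apply: nbhs_pinfty_gt; rewrite num_real.
move=> [t' M] /= [h1 h2].
have := nc_le_add (f t') (f t); ncf; lra.
have [M hM] := filter_ex H.
exists (Num.max M 0); split; first by rewrite le_max lexx orbT.
move=> t; apply: le_trans (ltW (hM t I)) _.
by rewrite le_max lexx.
Qed.

Lemma nc_sub_tri (a b c : C) : normc (a - b) <= normc (a - c) + normc (b - c).
Proof.
have -> : a - b = (a - c) + (- (b - c)) by ring.
by apply: le_trans (nc_tri _ _) _; rewrite nc_N.
Qed.

Lemma unif_cont (Y G : topologicalType) (m : Y * G -> Y) (f : Y -> C) :
  compact [set: Y] -> continuous m -> ccont f -> forall (g0 : G) (e : Rr), 0 < e ->
  \forall g \near g0, forall y, normc (f (m (y, g)) - f (m (y, g0))) < e.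
Proof.
move=> cpt cm cf g0 e e0.
have e2 : 0 < e / 2 by rewrite divr_gt0.
have H : \forall g \near g0, [set: Y] `<=`
    (fun y => normc (f (m (y, g)) - f (m (y, g0))) < e).
  apply: ((compact_near_coveringP _).1 cpt G (nbhs g0)
     (fun g y => normc (f (m (y, g)) - f (m (y, g0))) < e)).
  move=> y _.
  have := cm (y, g0) _ (cf (m (y, g0)) _ e2).
  case=> [[A B] /= [nA nB] sAB].
  exists (A, B) => //=.
  move=> [y' g] /= [Ay' Bg].
  have h1 := sAB (y', g) (conj Ay' Bg).
  have h2 := sAB (y', g0) (conj Ay' (nbhs_singleton nB)).
  simpl in h1, h2.
  apply: le_lt_trans (nc_sub_tri _ _ (f (m (y, g0)))) _.
  rewrite [e]splitr; exact: ltrD.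
apply: filterS H => g h y; exact: h y I.
Qed.


Section Cont.
Lemma cont_comp (X Y Z : topologicalType) (f : X -> Y) (g : Y -> Z) :
  continuous f -> continuous g -> continuous (fun x => g (f x)).
Proof. by move=> cf cg x; apply: continuous_comp; [exact: cf | exact: cg]. Qed.

Lemma cont_pair (X Y Z : topologicalType) (f : X -> Y) (g : X -> Z) :
  continuous f -> continuous g -> continuous (fun x => (f x, g x)).
Proof. by move=> cf cg x; apply: cvg_pair; [exact: cf | exact: cg]. Qed.

Lemma cont_fst (X Y : topologicalType) : continuous (fun p : X * Y => p.1).
Proof. by move=> p; exact: cvg_fst. Qed.

Lemma cont_snd (X Y : topologicalType) : continuous (fun p : X * Y => p.2).
Proof. by move=> p; exact: cvg_snd. Qed.

Lemma cont_id (X : topologicalType) : continuous (fun x : X => x).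
Proof. by move=> x. Qed.

Lemma cont_cst (X Y : topologicalType) (y : Y) : continuous (fun _ : X => y).
Proof. by move=> x; exact: cvg_cst. Qed.
End Cont.

Section Grp.
Variables (G : Type) (L : group_law G).
Local Notation "a * b" := (gmul L a b).
Local Notation "a ^-1" := (ginv L a).
Local Notation e := (gone L).

Lemma gmulVr a : a * a^-1 = e.
Proof.
have h1 : a * a^-1 = ((a^-1)^-1 * a^-1) * (a * a^-1) by rewrite gmulV gmul1.
by rewrite h1 -gmulA (gmulA L (a^-1) a (a^-1)) gmulV gmul1 gmulV.
Qed.

Lemma gmul1r a : a * e = a.
Proof. by rewrite -(gmulV L a) gmulA gmulVr gmul1. Qed.

Lemma ginvK a : (a^-1)^-1 = a.
Proof. by rewrite -[LHS]gmul1r -(gmulV L a) gmulA gmulV gmul1. Qed.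

Lemma ginvM a b : (a * b)^-1 = b^-1 * a^-1.
Proof.
have H : (b^-1 * a^-1) * (a * b) = e.
  by rewrite -gmulA (gmulA L (a^-1)) gmulV gmul1 gmulV.
by rewrite -[LHS](gmul1 L) -H -gmulA gmulVr gmul1r.
Qed.

Lemma ginv1 : e^-1 = e.
Proof. by rewrite -[LHS](gmul1 L) gmulVr. Qed.

Variables (X : Type) (a : group_action L X).
Lemma actK g x : act a (g^-1) (act a g x) = x.
Proof. by rewrite -actM gmulV act1. Qed.
Lemma actKV g x : act a g (act a (g^-1) x) = x.
Proof. by rewrite -actM gmulVr act1. Qed.
End Grp.


Lemma null0 (X : topologicalType) (u : nat -> X -> C) : (forall n x, u n x = 0) -> null_CX u.
Proof. by move=> h e e0; exists 0%N => n _ x; rewrite h nc0. Qed.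

Lemma dir_rl (G X : topologicalType) (L : group_law G) (a : group_action L X) :
  compact_group L -> compact [set: X] ->
  continuous (fun p : G * X => act a p.1 p.2) ->
  (exists sigma : orbit_space a * G -> X,
    homeomorphism sigma /\
    forall (g h : G) (x : X),
      act a g (sigma (\pi_(orbit_space a) x, h)) =
      sigma (\pi_(orbit_space a) x, gmul L g h)) -> rokhlin a.
Proof.
move=> [hG cG cmul cinv] cX cact [sigma [[csig [tau [ctau st ts]]] heq]].
pose th x := (tau x).2.
have cth : continuous th by exact: (@cont_comp _ _ _ tau (fun p => p.2) ctau (@cont_snd _ _)).
have thE g x : th (act a g x) = gmul L g (th x).
  rewrite /th -{1}(ts x); case: (tau x) => q h /=.
  by rewrite -(reprK q) heq st.
have cm : continuous (fun p : G * G => gmul L (ginv L p.2) p.1).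
  apply: (@cont_comp _ _ _ (fun p : G * G => (ginv L p.2, p.1)) (fun p : G * G => gmul L p.1 p.2) _ cmul).
  apply: cont_pair; last exact: cont_fst.
  exact: (@cont_comp _ _ _ (fun p : G * G => p.2) (ginv L) (@cont_snd _ _) cinv).
exists (fun f n x => f (th x)) => f f' cf cf'.
have linf : forall f, ccont f -> linf_CX (fun (n : nat) x => f (th x)).
  move=> k ck; split; first by move=> n; exact: ccont_comp cth ck.
  have [M [_ hM]] := ccont_bounded _ _ cG ck.
  by exists M => n x; exact: hM.
split; first exact: linf.
split.
  exists (fun n x => f (th x)); split; first exact: linf.
    move=> g0 e e0.
    have := @unif_cont _ _ _ _ cG cm cf g0 _ e0.
    apply: filterS => g hg n x; rewrite /alpha !thE; exact: hg.
  by apply: null0 => n x; rewrite subrr.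
split; first by move=> b _; apply: null0 => n x; rewrite mulrC subrr.
split; first by apply: null0 => n x; rewrite subrr.
split; first by move=> z; apply: null0 => n x; rewrite subrr.
split; first by apply: null0 => n x; rewrite subrr.
split; first by apply: null0 => n x; rewrite subrr.
split; first by apply: null0 => n x; rewrite subrr.
by move=> g; apply: null0 => n x; rewrite /alpha /Lt thE subrr.
Qed.


Section Sup.
Variable X : Type.
Implicit Types h : X -> Rr.

Definition rsup h : Rr := sup (range h).

Lemma rsup_ub h x : (exists M, forall y, h y <= M) -> h x <= rsup h.
Proof.
move=> [M hM]; apply: ub_le_sup; last by exists x.
by exists M => _ [y _ <-].
Qed.

Lemma rsup_le h M : 0 <= M -> (forall x, h x <= M) -> rsup h <= M.
Proof.
move=> M0 hM; rewrite /rsup.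
have [[r [x _ _]]|ne] := pselect (range h !=set0).
  by apply: ge_sup; [exists (h x), x | move=> _ [y _ <-]].
have -> : range h = set0.
  by apply/seteqP; split => // r hr; apply: ne; exists r.
by rewrite sup0.
Qed.

Lemma rsup_ge0 h : (forall x, 0 <= h x) -> (exists M, forall y, h y <= M) -> 0 <= rsup h.
Proof.
move=> h0 hb; rewrite /rsup.
have [[r [x _ _]]|ne] := pselect (range h !=set0).
  by apply: le_trans (h0 x) _; apply: rsup_ub.
have -> : range h = set0.
  by apply/seteqP; split => // r hr; apply: ne; exists r.
by rewrite sup0.
Qed.
End Sup.
Arguments rsup {X} h.
Arguments rsup_ub {X h} x.
Arguments rsup_le {X h} M.
Arguments rsup_ge0 {X h}.


Section CX.
Variables (X : topologicalType) (cX : compact [set: X]).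

Record CF := MkCF { cfun :> X -> C; cfunP : ccont cfun }.

Lemma cf_eq (u v : CF) : (forall x, u x = v x) -> u = v.
Proof.
case: u => u pu; case: v => v pv /= h.
have E : u = v by apply: funext.
subst v; f_equal; exact: proof_irrelevance.
Qed.

Definition cf0 := @MkCF _ (ccont_cst 0).
Definition cfadd (u v : CF) := @MkCF _ (ccontD (cfunP u) (cfunP v)).
Definition cfopp (u : CF) := @MkCF _ (ccontZ (-1) (cfunP u)).
Definition cfmul (u v : CF) := @MkCF _ (ccontM (cfunP u) (cfunP v)).
Definition cfscale (z : C) (u : CF) := @MkCF _ (ccontZ z (cfunP u)).
Definition cfstar (u : CF) := @MkCF _ (ccontJ (cfunP u)).
Definition cfnorm (u : CF) : Rr := rsup (fun x => normc (u x)).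

Lemma cf_bnd (u : CF) : exists M, forall x, normc (u x) <= M.
Proof. have [M [_ hM]] := ccont_bounded _ _ cX (cfunP u); by exists M. Qed.

Lemma cfnorm_ub (u : CF) x : normc (u x) <= cfnorm u.
Proof. exact: (@rsup_ub _ _ x (cf_bnd u)). Qed.

Lemma cfnorm_le (u : CF) M : 0 <= M -> (forall x, normc (u x) <= M) -> cfnorm u <= M.
Proof. exact: (@rsup_le _ _ M). Qed.

Lemma cfnorm_ge0 (u : CF) : 0 <= cfnorm u.
Proof. apply: (@rsup_ge0 _ _ _ (cf_bnd u)) => x; exact: nc_ge0. Qed.

Lemma cf_addA x y z : cfadd x (cfadd y z) = cfadd (cfadd x y) z.
Proof. by apply: cf_eq => t /=; rewrite addrA. Qed.
Lemma cf_addC x y : cfadd x y = cfadd y x.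
Proof. by apply: cf_eq => t /=; rewrite addrC. Qed.
Lemma cf_add0 x : cfadd cf0 x = x.
Proof. by apply: cf_eq => t /=; rewrite add0r. Qed.
Lemma cf_addN x : cfadd (cfopp x) x = cf0.
Proof. by apply: cf_eq => t /=; ring. Qed.
Lemma cf_scaleA z w x : cfscale z (cfscale w x) = cfscale (z * w) x.
Proof. by apply: cf_eq => t /=; rewrite mulrA. Qed.
Lemma cf_scale1 x : cfscale 1 x = x.
Proof. by apply: cf_eq => t /=; rewrite mul1r. Qed.
Lemma cf_scaleDr z x y : cfscale z (cfadd x y) = cfadd (cfscale z x) (cfscale z y).
Proof. by apply: cf_eq => t /=; rewrite mulrDr. Qed.
Lemma cf_scaleDl z w x : cfscale (z + w) x = cfadd (cfscale z x) (cfscale w x).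
Proof. by apply: cf_eq => t /=; rewrite mulrDl. Qed.
Lemma cf_mulA x y z : cfmul x (cfmul y z) = cfmul (cfmul x y) z.
Proof. by apply: cf_eq => t /=; rewrite mulrA. Qed.
Lemma cf_mulDl x y z : cfmul (cfadd x y) z = cfadd (cfmul x z) (cfmul y z).
Proof. by apply: cf_eq => t /=; rewrite mulrDl. Qed.
Lemma cf_mulDr x y z : cfmul x (cfadd y z) = cfadd (cfmul x y) (cfmul x z).
Proof. by apply: cf_eq => t /=; rewrite mulrDr. Qed.
Lemma cf_mulZl z x y : cfmul (cfscale z x) y = cfscale z (cfmul x y).
Proof. by apply: cf_eq => t /=; rewrite mulrA. Qed.
Lemma cf_mulZr z x y : cfmul x (cfscale z y) = cfscale z (cfmul x y).
Proof. by apply: cf_eq => t /=; ring. Qed.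
Lemma cf_starK x : cfstar (cfstar x) = x.
Proof. by apply: cf_eq => t /=; rewrite conjcK. Qed.
Lemma cf_starD x y : cfstar (cfadd x y) = cfadd (cfstar x) (cfstar y).
Proof. by apply: cf_eq => t /=; rewrite rmorphD. Qed.
Lemma cf_starZ z x : cfstar (cfscale z x) = cfscale (conjc z) (cfstar x).
Proof. by apply: cf_eq => t /=; rewrite rmorphM. Qed.
Lemma cf_starM x y : cfstar (cfmul x y) = cfmul (cfstar y) (cfstar x).
Proof. by apply: cf_eq => t /=; rewrite rmorphM mulrC. Qed.

Lemma cf_norm_eq0 x : cfnorm x = 0 <-> x = cf0.
Proof.
split.
  move=> h; apply: cf_eq => t /=; apply: nc_eq0; apply/eqP.
  by rewrite eq_le nc_ge0 andbT -h cfnorm_ub.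
move=> ->; apply/eqP; rewrite eq_le cfnorm_ge0 andbT.
by apply: cfnorm_le => // t; rewrite (_ : cf0 t = 0) // nc0.
Qed.

Lemma cf_normD x y : cfnorm (cfadd x y) <= cfnorm x + cfnorm y.
Proof.
apply: cfnorm_le; first by rewrite addr_ge0 ?cfnorm_ge0.
move=> t /=; apply: le_trans (nc_tri _ _) _; apply: lerD; exact: cfnorm_ub.
Qed.

Lemma cf_normZ z x : cfnorm (cfscale z x) = normc z * cfnorm x.
Proof.
apply/eqP; rewrite eq_le; apply/andP; split.
  apply: cfnorm_le; first by rewrite mulr_ge0 ?nc_ge0 ?cfnorm_ge0.
  by move=> t /=; rewrite nc_M ler_wpM2l ?nc_ge0 ?cfnorm_ub.
have [->|z0] := eqVneq z 0; first by rewrite nc0 mul0r cfnorm_ge0.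
have nz : 0 < normc z.
  by rewrite lt_def nc_ge0 andbT; apply/eqP => /nc_eq0 /eqP; rewrite (negbTE z0).
have h : cfnorm x <= cfnorm (cfscale z x) / normc z.
  apply: cfnorm_le; first by rewrite divr_ge0 ?cfnorm_ge0 ?nc_ge0.
  move=> t; rewrite ler_pdivlMr // mulrC -nc_M; exact: (cfnorm_ub (cfscale z x) t).
by have := ler_wpM2l (ltW nz) h; rewrite mulrCA divff ?gt_eqF // mulr1.
Qed.

Lemma cf_normM x y : cfnorm (cfmul x y) <= cfnorm x * cfnorm y.
Proof.
apply: cfnorm_le; first by rewrite mulr_ge0 ?cfnorm_ge0.
move=> t /=; rewrite nc_M; apply: ler_pM; rewrite ?nc_ge0 ?cfnorm_ub //.
Qed.

Lemma cf_norm_cstar x : cfnorm (cfmul (cfstar x) x) = cfnorm x ^+ 2.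
Proof.
have E t : normc (cfmul (cfstar x) x t) = normc (x t) ^+ 2.
  by rewrite /= nc_M nc_conj expr2.
apply/eqP; rewrite eq_le; apply/andP; split.
  apply: cfnorm_le; first by rewrite sqr_ge0.
  move=> t; rewrite E; apply: lerXn2r; rewrite ?nnegrE ?nc_ge0 ?cfnorm_ge0 ?cfnorm_ub //.
set N := cfnorm (cfmul (cfstar x) x).
have N0 : 0 <= N by exact: cfnorm_ge0.
have : cfnorm x <= Num.sqrt N.
  apply: cfnorm_le; first exact: sqrtr_ge0.
  move=> t; rewrite -[normc (x t)]ger0_norm ?nc_ge0 // -sqrtr_sqr ler_wsqrtr //.
  by rewrite -E; exact: cfnorm_ub.
move=> h; rewrite -(sqr_sqrtr N0); apply: lerXn2r; rewrite ?nnegrE ?cfnorm_ge0 ?sqrtr_ge0 //.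
Qed.

End CX.
Arguments cfadd {X}.
Arguments cfopp {X}.
Arguments cfmul {X}.
Arguments cfscale {X}.
Arguments cfstar {X}.
Arguments cfnorm {X}.
Arguments cfnorm_ub {X} cX u x.
Arguments cfnorm_le {X} u M.
Arguments cfnorm_ge0 {X} cX u.


Lemma real_cauchy (u : nat -> Rr) :
  (forall e : Rr, 0 < e -> exists N, forall m n, (N <= m)%N -> (N <= n)%N -> `|u m - u n| < e) ->
  exists l : Rr, forall e : Rr, 0 < e -> exists N, forall n, (N <= n)%N -> `|u n - l| < e.
Proof.
move=> hc.
have cu : cauchy (u @ \oo).
  apply: cauchy_exP => e e0.
  have [N hN] := hc e e0.
  exists (u N); exists N => // n /= hn.
  by rewrite /ball /= hN.
have cv : cvg (u @ \oo) by apply/(@cauchy_cvgP (Rdefinitions.R : realType)).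
exists (lim (u @ \oo)) => e e0.
have := (@cvgrPdist_lt _ (Rdefinitions.R : realType) _ _ _ u _).1 cv e e0.
case=> N _ hN; exists N => n hn.
by rewrite distrC; apply: hN.
Qed.

Lemma ReB (a b : C) : complex.Re (a - b) = complex.Re a - complex.Re b.
Proof. by case: a => ? ?; case: b => ? ?. Qed.
Lemma ImB (a b : C) : complex.Im (a - b) = complex.Im a - complex.Im b.
Proof. by case: a => ? ?; case: b => ? ?. Qed.

Lemma complex_cauchy (u : nat -> C) :
  (forall e : Rr, 0 < e -> exists N, forall m n, (N <= m)%N -> (N <= n)%N -> normc (u m - u n) < e) ->
  exists l : C, forall e : Rr, 0 < e -> exists N, forall n, (N <= n)%N -> normc (u n - l) < e.
Proof.
move=> hc.
have [la hla] : exists l : Rr, forall e : Rr, 0 < e -> exists N, forall n, (N <= n)%N -> `|complex.Re (u n) - l| < e.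
  apply: real_cauchy => e e0; have [N hN] := hc e e0; exists N => m n hm hn.
  by rewrite -ReB; apply: le_lt_trans (nc_Re _) (hN _ _ hm hn).
have [lb hlb] : exists l : Rr, forall e : Rr, 0 < e -> exists N, forall n, (N <= n)%N -> `|complex.Im (u n) - l| < e.
  apply: real_cauchy => e e0; have [N hN] := hc e e0; exists N => m n hm hn.
  by rewrite -ImB; apply: le_lt_trans (nc_Im _) (hN _ _ hm hn).
exists (la +i* lb)%C => e e0.
have e2 : 0 < e / 2 by rewrite divr_gt0.
have [N1 h1] := hla _ e2; have [N2 h2] := hlb _ e2.
exists (maxn N1 N2) => n hn.
apply: le_lt_trans (nc_ReIm _) _; rewrite ReB ImB /= [e]splitr.
apply: ltrD; [apply: h1 | apply: h2]; apply: leq_trans hn; rewrite ?leq_maxl ?leq_maxr //.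
Qed.


Section Complete.
Variables (X : topologicalType) (cX : compact [set: X]).

Lemma cf_subE (u v : CF X) t : cfadd u (cfopp v) t = u t - v t.
Proof. by rewrite /= mulN1r. Qed.

Lemma cf_complete (u : nat -> CF X) :
  (forall e : Rr, 0 < e -> exists N, forall m n, (N <= m)%N -> (N <= n)%N ->
      cfnorm (cfadd (u m) (cfopp (u n))) < e) ->
  exists l, forall e : Rr, 0 < e -> exists N, forall n, (N <= n)%N ->
      cfnorm (cfadd (u n) (cfopp l)) < e.
Proof.
move=> hc.
have pw : forall x, exists l : C, forall e : Rr, 0 < e -> exists N, forall n, (N <= n)%N -> normc (u n x - l) < e.
  move=> x; apply: complex_cauchy => e e0; have [N hN] := hc e e0.
  exists N => m n hm hn; rewrite -cf_subE.
  exact: le_lt_trans (cfnorm_ub cX _ x) (hN _ _ hm hn).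
have [lf hlf] := choice pw.
have unif : forall e : Rr, 0 < e -> exists N, forall n, (N <= n)%N -> forall x, normc (u n x - lf x) < e.
  move=> e e0; have e2 : 0 < e / 2 by rewrite divr_gt0.
  have [N hN] := hc _ e2; exists N => n hn x.
  have [Nx hNx] := hlf x _ e2.
  have hm1 : (N <= maxn N Nx)%N by rewrite leq_maxl.
  have hm2 : (Nx <= maxn N Nx)%N by rewrite leq_maxr.
  have h1 := hN _ _ hn hm1.
  have h1' := le_lt_trans (cfnorm_ub cX _ x) h1; rewrite cf_subE in h1'.
  have h2 := hNx _ hm2.
  have := nc_sub_tri (u n x) (lf x) (u (maxn N Nx) x).
  rewrite (nc_sym (lf x)); ncf; lra.
have clf : ccont lf.
  move=> x0 e e0; have e3 : 0 < e / 3 by rewrite divr_gt0.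
  have [N hN] := unif _ e3.
  have H := @cfunP _ (u N) x0 _ e3; move: H; apply: filterS => x hx.
  have h1 := hN N (leqnn N) x; have h2 := hN N (leqnn N) x0.
  have := nc_sub_tri (lf x) (lf x0) (u N x).
  have := nc_sub_tri (lf x0) (u N x) (u N x0).
  rewrite (nc_sym (lf x) (u N x)) (nc_sym (lf x0) (u N x0)); ncf; lra.
exists (@MkCF _ lf clf) => e e0.
have e2 : 0 < e / 2 by rewrite divr_gt0.
have [N hN] := unif _ e2; exists N => n hn.
apply: le_lt_trans (_ : e / 2 < e); last by rewrite ltr_pdivrMr // ltr_pMr // ltr1n.
apply: cfnorm_le; first exact: ltW.
by move=> x; rewrite cf_subE; apply: ltW; exact: hN.
Qed.

Definition CA : cstar_alg :=
  @CstarAlg (CF X) (cf0 X) (@cfadd X) (@cfopp X) (@cfmul X) (@cfscale X) (@cfstar X)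
    (@cfnorm X) (@cf_addA X) (@cf_addC X) (@cf_add0 X) (@cf_addN X)
    (@cf_scaleA X) (@cf_scale1 X) (@cf_scaleDr X) (@cf_scaleDl X)
    (@cf_mulA X) (@cf_mulDl X) (@cf_mulDr X) (@cf_mulZl X) (@cf_mulZr X)
    (@cf_starK X) (@cf_starD X) (@cf_starZ X) (@cf_starM X)
    (@cf_norm_eq0 X cX) (@cf_normD X cX) (@cf_normZ X cX) (@cf_normM X cX)
    (@cf_norm_cstar X cX) cf_complete.
End Complete.


Section Main.
Variables (G X : topologicalType) (L : group_law G) (a : group_action L X).
Hypotheses (cGrp : compact_group L) (cX : compact [set: X])
  (cact : continuous (fun p : G * X => act a p.1 p.2)).

Lemma cont_actg (g : G) : continuous (fun x => act a g x).
Proof.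
have h : continuous (fun x : X => (g, x)).
  by apply: cont_pair; [exact: cont_cst | exact: cont_id].
exact: (@cont_comp _ _ _ (fun x : X => (g, x)) (fun p : G * X => act a p.1 p.2) h cact).
Qed.

Lemma cont_m : continuous (fun p : X * G => act a (ginv L p.2) p.1).
Proof.
case: cGrp => _ _ _ cinv.
apply: (@cont_comp _ _ _ (fun p : X * G => (ginv L p.2, p.1)) (fun p : G * X => act a p.1 p.2) _ cact).
apply: cont_pair; last exact: cont_fst.
exact: (@cont_comp _ _ _ (fun p : X * G => p.2) (ginv L) (@cont_snd _ _) cinv).
Qed.

Local Notation CAX := (@CA X cX).

Definition betaf (g : G) (u : CF X) : CF X :=
  @MkCF _ _ (ccont_comp (cont_actg (ginv L g)) (@cfunP _ u)).

Lemma betafE g u x : betaf g u x = u (act a (ginv L g) x).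
Proof. by []. Qed.

Lemma beta_action : cstar_action L (A := CAX) betaf.
Proof.
split.
- by move=> u; apply: cf_eq => x; rewrite betafE ginv1 act1.
- by move=> g h u; apply: cf_eq => x; rewrite !betafE ginvM actM.
- by move=> g; split => * ; apply: cf_eq => x.
move=> u g0 e e0.
have e2 : 0 < e / 2 by rewrite divr_gt0.
have := @unif_cont _ _ _ _ cX cont_m (@cfunP _ u) g0 _ e2.
apply: filterS => g hg /=.
apply: le_lt_trans (_ : e / 2 < e); last by rewrite ltr_pdivrMr // ltr_pMr // ltr1n.
apply: cfnorm_le; first exact: ltW.
by move=> x; rewrite cf_subE !betafE; apply: ltW; exact: hg.
Qed.

Lemma CA_comm : ccommutative CAX.
Proof. by move=> u v; apply: cf_eq => x /=; rewrite mulrC. Qed.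

Lemma tocnull (w : nat -> CAX) (u : nat -> X -> C) :
  (forall n x, @cfun X (w n) x = u n x) -> null_CX u -> cnull w.
Proof.
move=> hw hu e e0.
have e2 : 0 < e / 2 by rewrite divr_gt0.
have [N hN] := hu _ e2; exists N => n hn.
apply: le_lt_trans (_ : e / 2 < e); last by rewrite ltr_pdivrMr // ltr_pMr // ltr1n.
apply: cfnorm_le; first exact: ltW.
by move=> x; rewrite hw; apply: ltW; exact: hN.
Qed.

End Main.


Section Psi.
Variables (G X : topologicalType) (L : group_law G) (a : group_action L X).
Hypotheses (cGrp : compact_group L) (cX : compact [set: X])
  (cact : continuous (fun p : G * X => act a p.1 p.2)).
Local Notation CAX := (@CA X cX).
Local Notation betaf := (@betaf G X L a cact).

Lemma tocnull' (w : nat -> CAX) (u : nat -> X -> C) :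
  null_CX u -> (forall n x, @cfun X (w n) x = u n x) -> cnull w.
Proof. by move=> hu hw; exact: (@tocnull X cX w u hw hu). Qed.
Arguments tocnull' {w u}.

Lemma ccont_Lt (g : G) (f : G -> C) : ccont f -> ccont (Lt L g f).
Proof.
case: cGrp => _ _ cmul _ cf.
have h : continuous (fun t : G => gmul L (ginv L g) t).
  have h' : continuous (fun t : G => (ginv L g, t)).
    by apply: cont_pair; [exact: cont_cst | exact: cont_id].
  exact: (@cont_comp _ _ _ (fun t : G => (ginv L g, t)) (fun p : G * G => gmul L p.1 p.2) h' cmul).
exact: (ccont_comp h cf).
Qed.

Lemma get_psi : weakly_equiv_semiprojective_comm L -> rokhlin a ->
  exists psi : (G -> C) -> X -> C,
  (forall f, ccont f -> ccont (psi f)) /\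
  (forall f f', ccont f -> ccont f' -> forall x, psi (fun t => f t + f' t) x = psi f x + psi f' x) /\
  (forall f z, ccont f -> forall x, psi (fun t => z * f t) x = z * psi f x) /\
  (forall f f', ccont f -> ccont f' -> forall x, psi (fun t => f t * f' t) x = psi f x * psi f' x) /\
  (forall f, ccont f -> forall x, psi (fun t => conjc (f t)) x = conjc (psi f x)) /\
  (forall x, psi (fun _ => 1) x = 1) /\
  (forall f g, ccont f -> forall x, psi (Lt L g f) x = psi f (act a (ginv L g) x)).
Proof.
move=> wsp [Phi hPhi].
have lin k : ccont k -> linf_CX (Phi k) by move=> ck; exact: (hPhi k k ck ck).1.
pose Phi' f n : CAX := match pselect (ccont (Phi f n)) with
   | left p => @MkCF _ _ p | right _ => cf0 X end.
have Phi'E f n : ccont f -> @cfun X (Phi' f n) = Phi f n.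
  move=> cf; rewrite /Phi'; case: pselect => // np.
  by exfalso; apply: np; exact: (lin f cf).1 n.
have hA : @equiv_hom_to_Ainf G L CAX betaf Phi'.
  move=> f f' cf cf'.
  have [hl [_ [_ [hD [hZ [hM [hJ [_ hE]]]]]]]] := hPhi f f' cf cf'.
  have cfD := ccontD cf cf'; have cfM := ccontM cf cf'; have cfJ := ccontJ cf.
  split.
    have [_ [M hMb]] := hl; exists (Num.max M 0) => n.
    apply: cfnorm_le; first by rewrite le_max lexx orbT.
    move=> x; rewrite Phi'E //; apply: le_trans (hMb n x) _; by rewrite le_max lexx.
  split.
    apply: tocnull'; first exact: hD.
    by move=> n x; rewrite cf_subE /= !Phi'E.
  split.
    move=> z; apply: tocnull'; first exact: (hZ z).
    move=> n x; rewrite cf_subE /= !Phi'E //.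
    exact: ccontZ.
  split.
    apply: tocnull'; first exact: hM.
    by move=> n x; rewrite cf_subE /= !Phi'E.
  split.
    apply: tocnull'; first exact: hJ.
    by move=> n x; rewrite cf_subE /= !Phi'E.
  move=> g; apply: tocnull'; first exact: (hE g).
  move=> n x; rewrite cf_subE betafE !Phi'E //.
  exact: ccont_Lt.
have c1 : ccont (fun _ : G => (1 : C)) by exact: ccont_cst.
have [Psi [hL hclose]] := wsp CAX (@CA_comm X cX) betaf (@beta_action G X L a cGrp cX cact) Phi' hA.
have [_ [_ [_ [_ [_ [_ [_ [h1 _]]]]]]]] := hPhi _ _ c1 c1.
have e2 : (0 : Rr) < 1 / 2 by rewrite divr_gt0.
have [N1 hN1] := h1 _ e2.
have [N2 hN2] := hclose _ c1 _ e2.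
pose n := maxn N1 N2.
have p1 : forall x, @cfun X (Psi (fun _ => 1) n) x = 1.
  move=> x.
  have a1 := hN1 n (leq_maxl _ _) x.
  have a2 := le_lt_trans (cfnorm_ub cX _ x) (hN2 n (leq_maxr _ _)).
  rewrite cf_subE Phi'E // in a2.
  have hlt : normc (@cfun X (Psi (fun _ => 1) n) x - 1) < 1.
    have := nc_sub_tri (@cfun X (Psi (fun _ => 1) n) x) 1 (Phi (fun _ => 1) n x).
    rewrite (nc_sym 1); ncf.
    have -> : (1 : Rr) = 1 / 2 + 1 / 2 by rewrite -splitr.
    lra.
  have [_ [_ [_ [hM _]]]] := hL _ _ c1 c1.
  have E : (fun t : G => (1 : C) * 1) = (fun _ => 1) by apply: funext => t; rewrite mulr1.
  have := congr1 (fun w => @cfun X w x) (hM n); rewrite /= E => hp.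
  set p := @cfun X (Psi (fun _ => 1) n) x in hp hlt *.
  have : p * (p - 1) = 0 by rewrite mulrBr mulr1 -hp subrr.
  move/eqP; rewrite mulf_eq0 => /orP [/eqP p0|]; last by rewrite subr_eq0 => /eqP.
  by move: hlt; rewrite p0 sub0r nc_N nc1 ltxx.
exists (fun f x => @cfun X (Psi f n) x).
split; first by move=> f _; exact: cfunP.
split.
  move=> f f' cf cf' x; have [_ [hD _]] := hL f f' cf cf'.
  by rewrite hD.
split.
  move=> f z cf x; have [_ [_ [hZ _]]] := hL f f cf cf.
  by rewrite hZ.
split.
  move=> f f' cf cf' x; have [_ [_ [_ [hM _]]]] := hL f f' cf cf'.
  by rewrite hM.
split.
  move=> f cf x; have [_ [_ [_ [_ [hJ _]]]]] := hL f f cf cf.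
  by rewrite hJ.
split; first exact: p1.
move=> f g cf x; have [_ [_ [_ [_ [_ hE]]]]] := hL f f cf cf.
by rewrite hE.
Qed.
End Psi.


Lemma nc_mulJ (z : C) : normc (z * conjc z) = normc z ^+ 2.
Proof. by rewrite nc_M nc_conj expr2. Qed.

Lemma char_point (G : topologicalType) (cG : compact [set: G]) (chi : (G -> C) -> C) :
  (forall f f', ccont f -> ccont f' -> chi (fun t => f t + f' t) = chi f + chi f') ->
  (forall f z, ccont f -> chi (fun t => z * f t) = z * chi f) ->
  (forall f f', ccont f -> ccont f' -> chi (fun t => f t * f' t) = chi f * chi f') ->
  (forall f, ccont f -> chi (fun t => conjc (f t)) = conjc (chi f)) ->
  chi (fun _ => 1) = 1 ->
  exists t0, forall f, ccont f -> chi f = f t0.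
Proof.
move=> hD hZ hM hJ h1.
have c1 : ccont (fun _ : G => (1 : C)) by exact: ccont_cst.
pose D := [set p : (G -> C) * Rr | [/\ ccont p.1, chi p.1 = 0 & 0 < p.2]].
pose B := fun p : (G -> C) * Rr => [set t | normc (p.1 t) < p.2].
have sq f : ccont f -> ccont (fun t => f t * conjc (f t)) /\
    chi (fun t => f t * conjc (f t)) = chi f * conjc (chi f).
  move=> cf; split; first exact: ccontM cf (ccontJ cf).
  by rewrite hM ?hJ //; exact: ccontJ.
have FF : Filter (filter_from D B).
  apply: filter_from_filter.
    exists (fun _ => 0, 1); split => //=; first exact: ccont_cst.
    have E : (fun _ : G => (0 : C) * 1) = (fun _ => 0) by apply: funext => t; rewrite mul0r.
    by rewrite -E (hZ _ 0 c1) mul0r.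
  move=> [h1' e1] [h2' e2] [/= ch1 xh1 pe1] [/= ch2 xh2 pe2].
  pose m := Num.min e1 e2.
  have m0 : 0 < m by rewrite lt_min pe1 pe2.
  have [c1' x1] := sq _ ch1; have [c2' x2] := sq _ ch2.
  exists (fun t => h1' t * conjc (h1' t) + h2' t * conjc (h2' t), m * m).
    split => /=; first exact: ccontD.
      by rewrite hD // x1 x2 xh1 xh2 !mul0r addr0.
    exact: mulr_gt0.
  move=> t; rewrite /B /= !mulJ -rmorphD nc_real ger0_norm ?addr_ge0 ?sqr_ge0 // => ht.
  have n1 := nc_ge0 (h1' t); have n2 := nc_ge0 (h2' t).
  have s1 : normc (h1' t) ^+ 2 < m ^+ 2.
    by apply: le_lt_trans ht; rewrite expr2 lerDl sqr_ge0.
  have s2 : normc (h2' t) ^+ 2 < m ^+ 2.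
    by apply: le_lt_trans ht; rewrite expr2 lerDr sqr_ge0.
  have sqlt : forall u v : Rr, 0 <= u -> 0 <= v -> u ^+ 2 < v ^+ 2 -> u < v.
    move=> u v u0 v0 h; rewrite ltNge; apply/negP => vu.
    have : v ^+ 2 <= u ^+ 2 by rewrite expr2 [X in _ <= X]expr2; apply: ler_pM.
    by rewrite leNgt h.
  have t1 := sqlt _ _ n1 (ltW m0) s1; have t2 := sqlt _ _ n2 (ltW m0) s2.
  split => /=; [apply: lt_le_trans t1 _ | apply: lt_le_trans t2 _]; by rewrite ge_min lexx ?orbT.
have PF : ProperFilter (filter_from D B).
  apply: filter_from_proper => -[h e] [/= ch xh pe].
  apply: contrapT => ne.
  have he : forall t, e <= normc (h t).
    move=> t; rewrite leNgt; apply/negP => lt; apply: ne; by exists t.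
  have [ck xk] := sq _ ch.
  have nk : forall t, e * e <= normc (h t * conjc (h t)).
    by move=> t; rewrite nc_mulJ expr2; apply: ler_pM; rewrite ?(ltW pe).
  have cr := ccont_inv (mulr_gt0 pe pe) nk ck.
  have E : (fun t => (h t * conjc (h t)) * (h t * conjc (h t))^-1) = (fun _ => 1).
    apply: funext => t; apply: mulfV; apply/eqP => k0.
    by have := nk t; rewrite k0 nc0 => /(lt_le_trans (mulr_gt0 pe pe)); rewrite ltxx.
  have := hM _ _ ck cr; rewrite E h1 xk xh mul0r mul0r => /eqP.
  by rewrite oner_eq0.
have [t0 [_ cl]] := cG _ PF filterT.
exists t0 => f cf.
pose h := fun t => f t + (- chi f) * 1.
have ch : ccont h by apply: ccontD => //; exact: ccontZ.
have xh : chi h = 0.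
  rewrite /h (hD f (fun t => - chi f * 1)) //; last exact: ccontZ.
  by rewrite (hZ _ _ c1) h1 mulr1 subrr.
have small : forall e : Rr, 0 < e -> normc (h t0) < e + e.
  move=> e e0.
  have FA : filter_from D B (B (h, e)) by exists (h, e).
  have [t [At Bt]] := cl _ _ FA (ch t0 e e0).
  have At1 : normc (h t) < e := At.
  have Bt1 : normc (h t - h t0) < e := Bt.
  have := nc_le_add (h t0) (h t); rewrite nc_sym; ncf; lra.
have h0 : h t0 = 0.
  apply: nc_eq0; apply/eqP; rewrite eq_le nc_ge0 andbT leNgt; apply/negP => pos.
  have := small _ (divr_gt0 pos (ltr0n _ 2)); rewrite -splitr ltxx //.
move: h0; rewrite /h mulr1 => /eqP; rewrite addr_eq0 opprK => /eqP ->.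
done.
Qed.


Lemma urys (G : topologicalType) (hG : hausdorff_space G) (cG : compact [set: G])
  (t0 : G) (U : set G) : nbhs t0 U ->
  exists f : G -> C, [/\ ccont f, f t0 = 0 & forall t, ~ U t -> f t = 1].
Proof.
move=> nU.
have crs := @normal_completely_regular Rr G (compact_normal hG cG) (hausdorff_accessible hG).
have clB : closed (~` (U°)) by apply: open_closedC; exact: open_interior.
have nB : ~ (~` (U°)) t0 by move=> /(_ nU).
have := crs t0 _ clB nB.
move=> /(@uniform_separatorP G Rr) [f [cf _ f0 f1]].
exists (fun t => (f t)%:C); split.
- exact: ccont_real.
- by rewrite (f0 (f t0)) //; exists t0.
- move=> t nUt; rewrite (f1 (f t)) //; exists t => //.
  by move=> /interior_subset.
Qed.

Lemma sep (G : topologicalType) (hG : hausdorff_space G) (cG : compact [set: G])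
  (t t' : G) : (forall f, ccont f -> f t = f t') -> t = t'.
Proof.
move=> h; apply: contrapT => ne.
have cl : closed [set t'] by apply: accessible_closed_set1; exact: hausdorff_accessible.
have op : open (~` [set t']) by exact: closed_openC.
have nU : nbhs t (~` [set t']) by apply: open_nbhs_nbhs; split => //; move=> /= E; apply: ne.
have [f [cf ft ft']] := urys _ hG cG _ _ nU.
have := h f cf; rewrite ft ft' //; last by move=> /= /(_ erefl).
by move=> /eqP; rewrite eq_sym oner_eq0.
Qed.


Section Final.
Variables (G X : topologicalType) (L : group_law G) (a : group_action L X).
Hypotheses (cGrp : compact_group L) (cX : compact [set: X])
  (cact : continuous (fun p : G * X => act a p.1 p.2)).
Variable psi : (G -> C) -> X -> C.
Hypotheses (pC : forall f, ccont f -> ccont (psi f))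
  (pD : forall f f', ccont f -> ccont f' -> forall x, psi (fun t => f t + f' t) x = psi f x + psi f' x)
  (pZ : forall f z, ccont f -> forall x, psi (fun t => z * f t) x = z * psi f x)
  (pM : forall f f', ccont f -> ccont f' -> forall x, psi (fun t => f t * f' t) x = psi f x * psi f' x)
  (pJ : forall f, ccont f -> forall x, psi (fun t => conjc (f t)) x = conjc (psi f x))
  (p1 : forall x, psi (fun _ => 1) x = 1)
  (pE : forall f g, ccont f -> forall x, psi (Lt L g f) x = psi f (act a (ginv L g) x)).

Let hG : hausdorff_space G. Proof. by case: cGrp. Qed.
Let cG : compact [set: G]. Proof. by case: cGrp. Qed.
Let cinv : continuous (ginv L). Proof. by case: cGrp. Qed.

Lemma theta_ex : exists th : X -> G, forall x f, ccont f -> psi f x = f (th x).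
Proof.
have H : forall x, exists t, forall f, ccont f -> psi f x = f t.
  move=> x; apply: (@char_point G cG (fun f => psi f x)).
  - by move=> f f' cf cf'; exact: pD.
  - by move=> f z cf; exact: pZ.
  - by move=> f f' cf cf'; exact: pM.
  - by move=> f cf; exact: pJ.
  - exact: p1.
have [th hth] := choice H; by exists th.
Qed.

Lemma dir_lr_aux : exists sigma : orbit_space a * G -> X,
    homeomorphism sigma /\
    forall (g h : G) (x : X),
      act a g (sigma (\pi_(orbit_space a) x, h)) =
      sigma (\pi_(orbit_space a) x, gmul L g h).
Proof.
have [th hth] := theta_ex.
have thE : forall g x, th (act a g x) = gmul L g (th x).
  move=> g x; apply: (@sep G hG cG) => f cf.
  rewrite -hth // -{1}(@ginvK _ L g) -pE // hth; last exact: ccont_Lt.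
  by rewrite /Lt ginvK.
have cth : continuous th.
  move=> x0 U nU.
  have [f [cf f0 f1]] := urys _ hG cG _ _ nU.
  have := pC _ cf x0 _ ltr01.
  apply: filterS => x /=; rewrite !hth // f0 subr0 => hx.
  apply: contrapT => nUx; move: hx; rewrite f1 // nc1 ltxx //.
pose s x := act a (ginv L (th x)) x.
have cs : continuous s.
  have hp : continuous (fun x => (ginv L (th x), x)).
    apply: cont_pair; last exact: cont_id.
    exact: (@cont_comp _ _ _ th (ginv L) cth cinv).
  exact: (@cont_comp _ _ _ (fun x => (ginv L (th x), x)) (fun p : G * X => act a p.1 p.2) hp cact).
have sE : forall g x, s (act a g x) = s x.
  by move=> g x; rewrite /s thE ginvM actM actK.
pose Q := orbit_space a.
have piE : forall x y : X, \pi_Q x = \pi_Q y -> exists g, act a g x = y.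
  by move=> x y /eqmodP /asboolP.
have piA : forall g (y : X), \pi_Q (act a g y) = \pi_Q y.
  move=> g y; apply/eqmodP/asboolP; exists (ginv L g); exact: actK.
have homo : {homo s : x y / \pi_Q x == \pi_Q y :> Q >-> x == y}.
  by move=> x y /eqP /piE [g <-]; rewrite sE.
have csq : continuous (s \o repr : Q -> X) := repr_comp_continuous cs homo.
pose sigma := fun p : Q * G => act a p.2 ((s \o repr) p.1).
pose tau := fun x : X => (\pi_Q x, th x).
exists sigma; split.
  split.
    have hp : continuous (fun p : Q * G => (p.2, (s \o repr) p.1)).
      apply: cont_pair; first exact: cont_snd.
      exact: (@cont_comp _ _ _ (fun p : Q * G => p.1) (s \o repr) (@cont_fst _ _) csq).
    exact: (@cont_comp _ _ _ (fun p : Q * G => (p.2, (s \o repr) p.1)) (fun p : G * X => act a p.1 p.2) hp cact).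
  exists tau; split.
  - apply: cont_pair; last exact: cth.
    exact: pi_continuous.
  - case=> q h; rewrite /tau /sigma /=; congr (_, _).
      by rewrite piA /s piA reprK.
    by rewrite thE /s thE gmulV gmul1r.
  - move=> x; rewrite /tau /sigma /=.
    have [g hg] := piE _ _ (reprK (\pi_Q x)).
    have E : s (repr (\pi_Q x)) = s x by rewrite -{2}hg sE.
    change (act a (th x) (s (repr (\pi_Q x))) = x).
    by rewrite E /s actKV.
by move=> g h x; rewrite /sigma /= actM.
Qed.
End Final.


Theorem theorem4p12 (G X : topologicalType) (L : group_law G)
  (a : group_action L X) :
  compact_group L -> @second_countable G ->
  hausdorff_space X -> compact [set: X] ->
  continuous (fun p : G * X => act a p.1 p.2) ->
  weakly_equiv_semiprojective_comm L ->
  rokhlin a <->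
  exists sigma : orbit_space a * G -> X,
    homeomorphism sigma /\
    forall (g h : G) (x : X),
      act a g (sigma (\pi_(orbit_space a) x, h)) =
      sigma (\pi_(orbit_space a) x, gmul L g h).
Proof.
move=> cGrp _ _ cX cact wsp; split.
  move=> rk.
  have [psi [pC [pD [pZ [pM [pJ [p1 pE]]]]]]] := @get_psi G X L a cGrp cX cact wsp rk.
  exact: (@dir_lr_aux G X L a cGrp cact psi pC pD pZ pM pJ p1 pE).
exact: (@dir_rl G X L a cGrp cX cact).
Qed.
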